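(* Let $\sigma < -2$ and $p > -1-\sigma$ be such that $a := \frac{\sigma+2}{1-p} = \frac12$, and let $c_a = \big(a(1-a)\big)^{1/(p-1)}$ and $u_a(x) = c_a x^a$. Then there is a positive solution $u \in C^2(0,+\infty)$ of $u''(x) + x^\sigma u(x)^p = 0$ for $x>0$ such that $u - u_a$ changes sign infinitely many times near $x=0$, $u/u_a$ is bounded on $(0,+\infty)$, and $u(x)/u_a(x)$ does not converge as $x \searrow 0$.
   Context: The function $u_a$ is itself a positive solution of the same equation on $(0,+\infty)$. *)

(* Defs.v *)
From Stdlib Require Import Reals Lra.
From Coquelicot Require Import Coquelicot.
Open Scope R_scope.

Definition expo_a (sigma p : R) : R := (sigma + 2) / (1 - p).

Definition c_a (sigma p : R) : R :=
  Rpower (expo_a sigma p * (1 - expo_a sigma p)) (1 / (p - 1)).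

Definition u_a (sigma p : R) (x : R) : R :=
  c_a sigma p * Rpower x (expo_a sigma p).

Definition C2_pos (u : R -> R) : Prop :=
  (forall x, 0 < x -> ex_derive u x) /\
  (forall x, 0 < x -> ex_derive (Derive u) x) /\
  (forall x, 0 < x -> continuous (Derive (Derive u)) x).

Definition changes_sign_inf_near_0 (f : R -> R) : Prop :=
  forall eps, 0 < eps ->
    (exists x, 0 < x < eps /\ 0 < f x) /\
    (exists y, 0 < y < eps /\ f y < 0).

(* Main.v *)
Require Import Defs.
From Stdlib Require Import Reals.
From Coquelicot Require Import Coquelicot.
From Stdlib Require Import Lra Lia Classical Factorial.
Open Scope R_scope.

Lemma ballR (x e y : R) : ball x e y <-> Rabs (y - x) < e.
Proof. split; intro H; exact H. Qed.

Lemma cont_of_eps (f : R -> R) x :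
  (forall eps, 0 < eps -> exists d, 0 < d /\ forall y, Rabs (y - x) < d -> Rabs (f y - f x) < eps) ->
  continuous f x.
Proof.
  intros H. apply continuity_pt_filterlim. intros eps Heps.
  destruct (H eps Heps) as [d [Hd H']]. exists d; split; auto.
  intros y [_ Hy]. apply H'. exact Hy.
Qed.

Lemma eps_of_cont (f : R -> R) x : continuous f x ->
  forall eps, 0 < eps -> exists d, 0 < d /\ forall y, Rabs (y - x) < d -> Rabs (f y - f x) < eps.
Proof.
  intros H eps Heps. apply continuity_pt_filterlim in H.
  destruct (H eps Heps) as [d [Hd H']]. exists d; split; auto.
  intros y Hy. destruct (Req_dec y x) as [->|Hne].
  - unfold Rminus; rewrite Rplus_opp_r, Rabs_R0; auto.
  - apply H'. split; [split; [exact I| auto] | exact Hy].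
Qed.

Lemma RInt_correctR (h : R -> R) a b : ex_RInt h a b -> is_RInt h a b (RInt h a b).
Proof. apply (RInt_correct (V:=R_CompleteNormedModule)). Qed.

Lemma ex_RInt_contR (h : R -> R) a b : (forall x, continuous h x) -> ex_RInt h a b.
Proof. intros H. apply (ex_RInt_continuous (V:=R_CompleteNormedModule)). intros; auto. Qed.

Lemma cont_of_ex (f : R -> R) x : ex_derive f x -> continuous f x.
Proof. intros H. apply (ex_derive_continuous (K:=R_AbsRing) (V:=R_NormedModule)). exact H. Qed.

Lemma cont_of_der (f : R -> R) x l : is_derive f x l -> continuous f x.
Proof. intros H. apply cont_of_ex. exists l; exact H. Qed.

Lemma contR_minus (f h : R -> R) x : continuous f x -> continuous h x -> continuous (fun y => f y - h y) x.
Proof. intros H1 H2. apply (continuous_minus (U:=R_UniformSpace) (V:=R_NormedModule) f h x H1 H2). Qed.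

Lemma contR_plus (f h : R -> R) x : continuous f x -> continuous h x -> continuous (fun y => f y + h y) x.
Proof. intros H1 H2. apply (continuous_plus (U:=R_UniformSpace) (V:=R_NormedModule) f h x H1 H2). Qed.

Lemma contR_mult (f h : R -> R) x : continuous f x -> continuous h x -> continuous (fun y => f y * h y) x.
Proof. intros H1 H2. apply (continuous_mult (U:=R_UniformSpace) f h x H1 H2). Qed.

Lemma contR_comp (f h : R -> R) x : continuous f x -> continuous h (f x) -> continuous (fun y => h (f y)) x.
Proof. intros H1 H2. apply (continuous_comp (U:=R_UniformSpace) (V:=R_UniformSpace) (W:=R_UniformSpace) f h x H1 H2). Qed.

Lemma abs3 a b c : Rabs (a + b - c) <= Rabs a + Rabs b + Rabs c.
Proof.
  unfold Rminus. eapply Rle_trans; [apply Rabs_triang|]. rewrite Rabs_Ropp.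
  pose proof (Rabs_triang a b). lra.
Qed.

Lemma abs_le_eps_eq (x y : R) : (forall eps, 0 < eps -> Rabs (x - y) <= eps) -> x = y.
Proof.
  intros H. destruct (Req_dec x y) as [|Hne]; auto.
  assert (Hp : 0 < Rabs (x - y)) by (apply Rabs_pos_lt; lra).
  specialize (H (Rabs (x - y) / 2) ltac:(lra)). lra.
Qed.

Lemma cont_pt_of (f : R -> R) x : continuous f x -> continuity_pt f x.
Proof. intros; apply continuity_pt_filterlim; auto. Qed.

Lemma prim_deriv (h : R -> R) (a : R) : (forall x, continuous h x) ->
  forall t, is_derive (fun s => RInt h a s) t (h t).
Proof.
  intros Hc t. apply is_derive_RInt with (a := a).
  - apply filter_forall. intro b. apply RInt_correctR, ex_RInt_contR; auto.
  - auto.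
Qed.

Lemma prim_cont (h : R -> R) (a : R) : (forall x, continuous h x) ->
  forall t, continuous (fun s => RInt h a s) t.
Proof.
  intros Hc t. apply (ex_derive_continuous (fun s => RInt h a s)). exists (h t). apply prim_deriv; auto.
Qed.

Lemma lin_deriv (w0 v0 : R) (I : R -> R) dI t : is_derive I t dI ->
  is_derive (fun t => w0 + v0 * t + I t) t (v0 + dI).
Proof.
  intros H.
  assert (H1 : is_derive (fun t => w0 + v0 * t) t v0) by (auto_derive; auto; ring).
  exact (is_derive_plus _ _ _ _ _ H1 H).
Qed.

Lemma int_bound (h : R -> R) (K : R) (k : nat) (s : R) :
  (forall x, continuous h x) -> 0 <= K ->
  (forall r, Rabs r <= Rabs s -> Rabs (h r) <= K * Rabs r ^ k) ->
  Rabs (RInt h 0 s) <= K * Rabs s ^ (S k) / INR (S k).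
Proof.
  intros Hc HK Hb.
  assert (HS : INR (S k) <> 0) by (apply not_0_INR; lia).
  assert (Hex : forall a b, ex_RInt h a b) by (intros; apply (ex_RInt_continuous (V:=R_CompleteNormedModule)); intros; auto).
  destruct (Rle_or_lt 0 s) as [Hs|Hs].
  - rewrite (Rabs_pos_eq s Hs).
    apply (norm_RInt_le h (fun x => K * x ^ k) 0 s _ (K * s ^ (S k) / INR (S k)) Hs).
    + intros x Hx. specialize (Hb x). rewrite (Rabs_pos_eq x) in Hb by lra.
      apply Hb. rewrite Rabs_pos_eq; lra.
    + apply RInt_correctR, Hex.
    + replace (K * s ^ S k / INR (S k)) with
        (minus (K * s ^ S k / INR (S k)) (K * 0 ^ S k / INR (S k))).
      2:{ unfold minus, plus, opp; simpl. field. auto. }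
      apply (is_RInt_derive (fun x => K * x ^ S k / INR (S k))).
      * intros x _. auto_derive; auto. change (match k with 0%nat => 1 | S _ => INR k + 1 end) with (INR (S k)). field. auto.
      * intros x _. apply (cont_of_ex (fun x => K * x ^ k)). auto_derive. auto.
  - rewrite (Rabs_left s Hs).
    rewrite <- opp_RInt_swap by apply Hex.
    change (Rabs (- RInt h s 0) <= K * (- s) ^ S k / INR (S k)).
    rewrite Rabs_Ropp.
    apply (norm_RInt_le h (fun x => K * (- x) ^ k) s 0 _ (K * (- s) ^ (S k) / INR (S k))).
    + lra.
    + intros x Hx. specialize (Hb x). rewrite (Rabs_left1 x) in Hb by lra.
      apply Hb. rewrite (Rabs_left s) by lra. lra.
    + apply RInt_correctR, Hex.
    + replace (K * (- s) ^ S k / INR (S k)) with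
        (minus (- K * (- 0) ^ S k / INR (S k)) (- K * (- s) ^ S k / INR (S k))).
      2:{ unfold minus, plus, opp; simpl. field. auto. }
      apply (is_RInt_derive (fun x => - K * (- x) ^ S k / INR (S k))).
      * intros x _. auto_derive; auto. change (match k with 0%nat => 1 | S _ => INR k + 1 end) with (INR (S k)). field. auto.
      * intros x _. apply (cont_of_ex (fun x => K * (- x) ^ k)). auto_derive. auto.
Qed.

Lemma exp_series (x : R) : ex_series (fun n => / INR (fact n) * x ^ n).
Proof.
  destruct (exist_exp x) as [l Hl]. exists l. apply is_series_Reals. exact Hl.
Qed.

Lemma telesc (f : nat -> R -> R) t k :
  f (S k) t = f 0%nat t + sum_f_R0 (fun j => f (S j) t - f j t) k.
Proof.
  induction k; simpl; lra.
Qed.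

Lemma unif_conv (f : nat -> R -> R) (c : nat -> R) (Dom : R -> Prop) :
  ex_series c -> (forall n t, Dom t -> Rabs (f (S n) t - f n t) <= c n) ->
  forall eps, 0 < eps -> exists N, forall n t, (N <= n)%nat -> Dom t ->
   Rabs (f 0%nat t + Series (fun k => f (S k) t - f k t) - f n t) <= eps.
Proof.
  intros Hc Hb eps Heps.
  pose proof (Series_correct _ Hc) as Hs.
  unfold is_series in Hs. pose proof (proj1 (filterlim_locally (F:=eventually) (sum_n c) (Series c)) Hs) as Hs2. clear Hs. rename Hs2 into Hs.
  destruct (Hs (mkposreal eps Heps)) as [N0 HN0].
  exists (S N0). intros n t Hn Ht.
  destruct n as [|k]; [lia|].
  assert (Hk : (N0 <= k)%nat) by lia.
  set (d := fun j => f (S j) t - f j t).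
  assert (Hd : ex_series d).
  { apply (ex_series_le (K:=R_AbsRing) (V:=R_CompleteNormedModule) d c); auto. intros j. unfold norm; simpl. unfold abs; simpl. apply Hb; auto. }
  rewrite (telesc f t k). fold d.
  rewrite (Series_incr_n d (S k)) by (auto; lia). simpl pred.
  replace (f 0%nat t + (sum_f_R0 d k + Series (fun j => d (S k + j)%nat)) -
    (f 0%nat t + sum_f_R0 d k)) with (Series (fun j => d (S k + j)%nat)) by ring.
  assert (Hct : ex_series (fun j => c (S k + j)%nat)) by (apply ex_series_incr_n; auto).
  assert (Hdt : ex_series (fun j => Rabs (d (S k + j)%nat))).
  { apply (ex_series_le (K:=R_AbsRing) (V:=R_CompleteNormedModule) _ (fun j => c (S k + j)%nat)); auto.
    intros j. unfold norm; simpl. unfold abs; simpl. rewrite Rabs_Rabsolu. apply Hb; auto. }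
  eapply Rle_trans. apply Series_Rabs; auto.
  eapply Rle_trans. apply (Series_le _ (fun j => c (S k + j)%nat)); auto.
  { intros j. split. apply Rabs_pos. apply Hb; auto. }
  rewrite (Series_incr_n c (S k)) in HN0 by (auto; lia).
  specialize (HN0 k Hk). simpl pred in HN0. rewrite ballR in HN0.
  rewrite sum_n_Reals in HN0.
  rewrite Rabs_minus_sym in HN0.
  replace (sum_f_R0 c k + Series (fun j => c (S k + j)%nat) - sum_f_R0 c k)
    with (Series (fun j => c (S k + j)%nat)) in HN0 by ring.
  pose proof (Rle_abs (Series (fun j => c (S k + j)%nat))). simpl in HN0. apply Rle_trans with (Rabs (Series (fun j => c (S (k + j))))). exact H. lra.
Qed.

Section Picard.
Variable g : R -> R.
Variables B L w0 v0 : R.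
Hypothesis HB : forall x, Rabs (g x) <= B.
Hypothesis HL : forall x y, Rabs (g x - g y) <= L * Rabs (x - y).
Hypothesis HL0 : 0 <= L.

Lemma B_ge0 : 0 <= B.
Proof. pose proof (HB 0). pose proof (Rabs_pos (g 0)). lra. Qed.

Lemma g_cont : forall x, continuous g x.
Proof.
  intros x. apply cont_of_eps. intros eps Heps.
  exists (eps / (L + 1)). split.
  - apply Rdiv_lt_0_compat; lra.
  - intros y Hy. eapply Rle_lt_trans. apply HL.
    apply Rle_lt_trans with ((L + 1) * Rabs (y - x)).
    + apply Rmult_le_compat_r. apply Rabs_pos. lra.
    + apply Rmult_lt_reg_l with (/ (L + 1)).
      * apply Rinv_0_lt_compat; lra.
      * field_simplify; try lra.
Qed.

Fixpoint pic (n : nat) : R -> R :=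
  match n with
  | O => fun t => w0 + v0 * t
  | S n => fun t => w0 + v0 * t + RInt (fun s => RInt (fun r => g (pic n r)) 0 s) 0 t
  end.

Lemma pic_cont : forall n t, continuous (pic n) t.
Proof.
  induction n; intros t.
  - apply (cont_of_ex (fun t => w0 + v0 * t)). auto_derive. auto.
  - apply (cont_of_der _ _ (v0 + RInt (fun r => g (pic n r)) 0 t)).
    simpl. apply lin_deriv. apply prim_deriv.
    apply prim_cont. intros x. apply continuous_comp; auto. apply g_cont.
Qed.

Lemma gpic_cont : forall n x, continuous (fun r => g (pic n r)) x.
Proof. intros n x. apply continuous_comp. apply pic_cont. apply g_cont. Qed.

Lemma Fpic_cont : forall n x, continuous (fun s => RInt (fun r => g (pic n r)) 0 s) x.
Proof. intros. apply prim_cont. apply gpic_cont. Qed.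

Fixpoint Kc (n : nat) : R :=
  match n with
  | O => B / 2
  | S n => L * Kc n / (INR (2 * n + 3) * INR (2 * n + 4))
  end.

Lemma Kc_ge0 : forall n, 0 <= Kc n.
Proof.
  induction n; simpl.
  - pose proof B_ge0; lra.
  - apply Rmult_le_pos. apply Rmult_le_pos; auto.
    apply Rlt_le, Rinv_0_lt_compat. apply Rmult_lt_0_compat; apply lt_0_INR; lia.
Qed.

Lemma diff_pic (n : nat) t :
  pic (S (S n)) t - pic (S n) t =
  RInt (fun s => RInt (fun r => g (pic (S n) r) - g (pic n r)) 0 s) 0 t.
Proof.
  change (pic (S (S n)) t) with (w0 + v0 * t + RInt (fun s => RInt (fun r => g (pic (S n) r)) 0 s) 0 t).
  change (pic (S n) t) with (w0 + v0 * t + RInt (fun s => RInt (fun r => g (pic n r)) 0 s) 0 t).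
  assert (E : RInt (fun s => RInt (fun r => g (pic (S n) r) - g (pic n r)) 0 s) 0 t =
     RInt (fun s => RInt (fun r => g (pic (S n) r)) 0 s - RInt (fun r => g (pic n r)) 0 s) 0 t).
  { apply RInt_ext. intros x _.
    exact (RInt_minus (V:=R_CompleteNormedModule) _ _ _ _ (ex_RInt_contR _ _ _ (gpic_cont (S n))) (ex_RInt_contR _ _ _ (gpic_cont n))). }
  rewrite E.
  rewrite (RInt_minus (V:=R_CompleteNormedModule) _ _ _ _ (ex_RInt_contR _ _ _ (Fpic_cont (S n))) (ex_RInt_contR _ _ _ (Fpic_cont n))).
  unfold minus, plus, opp; simpl. ring.
Qed.

Lemma pic_bound : forall n t, Rabs (pic (S n) t - pic n t) <= Kc n * Rabs t ^ (2 * n + 2).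
Proof.
  induction n; intros t.
  - assert (E0 : @eq R (pic 1 t - pic 0 t) (RInt (fun s => RInt (fun r => g (pic 0 r)) 0 s) 0 t)).
    { change (pic 1 t) with (w0 + v0*t + RInt (fun s => RInt (fun r => g (pic 0 r)) 0 s) 0 t).
      change (pic 0 t) with (w0 + v0*t). ring. }
    rewrite E0.
    replace (Kc 0 * Rabs t ^ (2 * 0 + 2)) with (B * Rabs t ^ 2 / INR 2)
      by (simpl; field).
    apply int_bound. apply Fpic_cont. apply B_ge0.
    intros r _. replace (B * Rabs r ^ 1) with (B * Rabs r ^ 1 / INR 1) by (simpl; field).
    apply int_bound. apply gpic_cont. apply B_ge0.
    intros r' _. simpl. rewrite Rmult_1_r. apply HB.
  - rewrite diff_pic.
    assert (Hk : 0 <= L * Kc n) by (apply Rmult_le_pos; auto; apply Kc_ge0).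
    replace (Kc (S n) * Rabs t ^ (2 * S n + 2)) with
      (L * Kc n / INR (S (2 * n + 2)) * Rabs t ^ (S (S (2 * n + 2))) / INR (S (S (2 * n + 2)))).
    2:{ change (Kc (S n)) with (L * Kc n / (INR (2 * n + 3) * INR (2 * n + 4))). replace (2 * S n + 2)%nat with (S (S (2 * n + 2))) by lia.
        replace (S (2 * n + 2)) with (2 * n + 3)%nat by lia.
        replace (S (2 * n + 3)) with (2 * n + 4)%nat by lia.
        field. split; apply not_0_INR; lia. }
    apply int_bound.
    + apply prim_cont. intros x. apply contR_minus; apply gpic_cont.
    + apply Rmult_le_pos; auto. apply Rlt_le, Rinv_0_lt_compat, lt_0_INR; lia.
    + intros s _.
      replace (L * Kc n / INR (S (2 * n + 2)) * Rabs s ^ S (2 * n + 2)) with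
        (L * Kc n * Rabs s ^ S (2 * n + 2) / INR (S (2 * n + 2))) by (field; apply not_0_INR; lia).
      apply int_bound; auto.
      * intros x. apply contR_minus; apply gpic_cont.
      * intros r _. eapply Rle_trans. apply HL. rewrite Rmult_assoc.
        apply Rmult_le_compat_l; auto.
Qed.

Lemma dbl_minus (h1 h2 : R -> R) t : (forall x, continuous h1 x) -> (forall x, continuous h2 x) ->
  RInt (fun s => RInt h1 0 s) 0 t - RInt (fun s => RInt h2 0 s) 0 t =
  RInt (fun s => RInt (fun r => h1 r - h2 r) 0 s) 0 t.
Proof.
  intros H1 H2.
  assert (E : RInt (fun s => RInt (fun r => h1 r - h2 r) 0 s) 0 t =
     RInt (fun s => RInt h1 0 s - RInt h2 0 s) 0 t).
  { apply RInt_ext. intros x _.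
    exact (RInt_minus (V:=R_CompleteNormedModule) _ _ _ _ (ex_RInt_contR _ _ _ H1) (ex_RInt_contR _ _ _ H2)). }
  rewrite E.
  rewrite (RInt_minus (V:=R_CompleteNormedModule) _ _ _ _ (ex_RInt_contR _ _ _ (prim_cont _ _ H1)) (ex_RInt_contR _ _ _ (prim_cont _ _ H2))).
  reflexivity.
Qed.

Lemma Kc_bound n : Kc n <= B / 2 * (/ INR (fact n) * L ^ n).
Proof.
  induction n.
  - simpl. lra.
  - change (Kc (S n)) with (L * Kc n / (INR (2 * n + 3) * INR (2 * n + 4))).
    rewrite fact_simpl, mult_INR.
    assert (H1 : 0 < INR (S n)) by (apply lt_0_INR; lia).
    assert (H2 : 0 < INR (fact n)) by (apply lt_0_INR, lt_O_fact).
    assert (H3 : INR (S n) <= INR (2 * n + 3) * INR (2 * n + 4)).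
    { rewrite <- mult_INR. apply le_INR. nia. }
    assert (H4 : 0 <= Kc n) by apply Kc_ge0.
    unfold Rdiv. simpl pow.
    apply Rle_trans with (L * Kc n * / INR (S n)).
    + apply Rmult_le_compat_l. apply Rmult_le_pos; auto.
      apply Rinv_le_contravar; auto.
    + rewrite Rinv_mult.
      replace (B * / 2 * (/ INR (S n) * / INR (fact n) * (L * L ^ n))) with
        (L * (B * / 2 * (/ INR (fact n) * L ^ n)) * / INR (S n)) by ring.
      apply Rmult_le_compat_r. apply Rlt_le, Rinv_0_lt_compat; auto.
      apply Rmult_le_compat_l; auto.
Qed.

Definition maj (T : R) (n : nat) : R := B / 2 * T ^ 2 * (/ INR (fact n) * (L * T ^ 2) ^ n).

Lemma maj_bound n t T : Rabs t <= T ->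
  Rabs (pic (S n) t - pic n t) <= maj T n.
Proof.
  intros Ht. eapply Rle_trans. apply pic_bound.
  assert (H0 : 0 <= Rabs t) by apply Rabs_pos.
  apply Rle_trans with (Kc n * T ^ (2 * n + 2)).
  - apply Rmult_le_compat_l. apply Kc_ge0. apply pow_incr; lra.
  - apply Rle_trans with (B / 2 * (/ INR (fact n) * L ^ n) * T ^ (2 * n + 2)).
    + apply Rmult_le_compat_r. apply pow_le; lra. apply Kc_bound.
    + unfold maj. rewrite Rpow_mult_distr.
      replace (2 * n + 2)%nat with (2 + 2 * n)%nat by lia.
      rewrite pow_add, <- pow_mult. right; ring.
Qed.

Definition wl (t : R) : R := pic 0 t + Series (fun k => pic (S k) t - pic k t).

Lemma wl_unif T : forall eps, 0 < eps -> exists N, forall n t, (N <= n)%nat -> Rabs t <= T ->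
  Rabs (wl t - pic n t) <= eps.
Proof.
  intros eps Heps.
  apply (unif_conv pic (maj T) (fun t => Rabs t <= T)); auto.
  - unfold maj. apply (ex_series_scal_l (K:=R_AbsRing) (V:=R_NormedModule)). apply exp_series.
  - intros n t Ht. apply maj_bound; auto.
Qed.

Lemma wl_cont t : continuous wl t.
Proof.
  apply cont_of_eps. intros eps Heps.
  destruct (wl_unif (Rabs t + 1) (eps / 3)) as [N HN]; [lra|].
  destruct (eps_of_cont _ _ (pic_cont N t) (eps / 3)) as [d [Hd Hd']]; [lra|].
  exists (Rmin d 1). split. apply Rmin_pos; lra.
  intros y Hy.
  assert (Hy1 : Rabs (y - t) < d) by (eapply Rlt_le_trans; [exact Hy| apply Rmin_l]).
  assert (Hy2 : Rabs (y - t) < 1) by (eapply Rlt_le_trans; [exact Hy| apply Rmin_r]).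
  assert (Hya : Rabs y <= Rabs t + 1).
  { pose proof (Rabs_triang_inv y t). lra. }
  pose proof (HN N y (le_n N) Hya) as A1.
  pose proof (HN N t (le_n N) ltac:(lra)) as A2.
  pose proof (Hd' y Hy1) as A3.
  replace (wl y - wl t) with ((wl y - pic N y) + (pic N y - pic N t) - (wl t - pic N t)) by ring.
  pose proof (abs3 (wl y - pic N y) (pic N y - pic N t) (wl t - pic N t)). lra.
Qed.

Lemma gwl_cont x : continuous (fun r => g (wl r)) x.
Proof. apply contR_comp. apply wl_cont. apply g_cont. Qed.

Lemma wl_fix t : wl t = w0 + v0 * t + RInt (fun s => RInt (fun r => g (wl r)) 0 s) 0 t.
Proof.
  apply abs_le_eps_eq. intros eps Heps.
  set (e1 := eps / (1 + L * Rabs t ^ 2)).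
  assert (HD : 0 < 1 + L * Rabs t ^ 2).
  { pose proof (pow2_ge_0 (Rabs t)). pose proof (Rmult_le_pos _ _ HL0 H). lra. }
  assert (He1 : 0 < e1) by (apply Rdiv_lt_0_compat; lra).
  destruct (wl_unif (Rabs t) e1 He1) as [N HN].
  pose proof (HN (S N) t (le_S _ _ (le_n N)) (Rle_refl _)) as A1.
  assert (A2 : Rabs (pic (S N) t - (w0 + v0 * t + RInt (fun s => RInt (fun r => g (wl r)) 0 s) 0 t))
     <= L * e1 * Rabs t ^ 2 / 2).
  { change (pic (S N) t) with (w0 + v0 * t + RInt (fun s => RInt (fun r => g (pic N r)) 0 s) 0 t).
    replace (w0 + v0 * t + RInt (fun s => RInt (fun r => g (pic N r)) 0 s) 0 t -
       (w0 + v0 * t + RInt (fun s => RInt (fun r => g (wl r)) 0 s) 0 t)) with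
      (RInt (fun s => RInt (fun r => g (pic N r)) 0 s) 0 t - RInt (fun s => RInt (fun r => g (wl r)) 0 s) 0 t) by ring.
    rewrite dbl_minus by (apply gpic_cont || apply gwl_cont).
    replace (L * e1 * Rabs t ^ 2 / 2) with (L * e1 * Rabs t ^ 2 / INR 2) by (simpl; field).
    apply int_bound.
    - apply prim_cont. intros x. apply contR_minus. apply gpic_cont. apply gwl_cont.
    - apply Rmult_le_pos; lra.
    - intros s Hs. replace (L * e1 * Rabs s ^ 1) with (L * e1 * Rabs s ^ 1 / INR 1) by (simpl; field).
      apply int_bound.
      + intros x. apply contR_minus. apply gpic_cont. apply gwl_cont.
      + apply Rmult_le_pos; lra.
      + intros r Hr. simpl. rewrite Rmult_1_r. eapply Rle_trans. apply HL.
        apply Rmult_le_compat_l; auto. rewrite Rabs_minus_sym. apply HN; auto. lra. }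
  replace (wl t - (w0 + v0 * t + RInt (fun s => RInt (fun r => g (wl r)) 0 s) 0 t)) with
    ((wl t - pic (S N) t) + (pic (S N) t - (w0 + v0 * t + RInt (fun s => RInt (fun r => g (wl r)) 0 s) 0 t))) by ring.
  eapply Rle_trans. apply Rabs_triang.
  apply Rle_trans with (e1 * (1 + L * Rabs t ^ 2)).
  - assert (0 <= L * e1 * Rabs t ^ 2) by (apply Rmult_le_pos; [apply Rmult_le_pos; lra| apply pow2_ge_0]).
    nra.
  - unfold e1. right. field. lra.
Qed.

Lemma picard_sol : exists w w1 : R -> R, w 0 = w0 /\ w1 0 = v0 /\ (forall t, is_derive w t (w1 t)) /\ (forall t, is_derive w1 t (g (w t))).
Proof.
  exists wl, (fun t => v0 + RInt (fun r => g (wl r)) 0 t).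
  split; [|split; [|split]].
  - rewrite wl_fix. rewrite RInt_point. change (@zero R_CompleteNormedModule) with 0. ring.
  - simpl. rewrite RInt_point. change (@zero R_CompleteNormedModule) with 0. ring.
  - intros t. apply (is_derive_ext (fun t => w0 + v0 * t + RInt (fun s => RInt (fun r => g (wl r)) 0 s) 0 t)).
    + intros; symmetry; apply wl_fix.
    + apply lin_deriv. apply prim_deriv. apply prim_cont. apply gwl_cont.
  - intros t.
    assert (H1 : is_derive (fun _ : R => v0) t 0) by (auto_derive; auto).
    pose proof (is_derive_plus _ _ _ _ _ H1 (prim_deriv _ 0 gwl_cont t)) as H2.
    replace (g (wl t)) with (plus 0 (g (wl t))) by (unfold plus; simpl; ring).
    exact H2.
Qed.
End Picard.

Lemma mvt (f df : R -> R) a b : a < b -> (forall x, is_derive f x (df x)) ->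
  exists xi, a <= xi <= b /\ f b - f a = df xi * (b - a).
Proof.
  intros Hab Hd.
  destruct (MVT_gen f a b df) as [xi [Hxi E]].
  - intros; auto.
  - intros x _. apply cont_pt_of. apply (cont_of_der _ _ (df x)). auto.
  - exists xi. rewrite Rmin_left, Rmax_right in Hxi by lra. auto.
Qed.

Lemma no_one_side (y y1 y2 : R -> R) T A kap del :
  (forall t, is_derive y t (y1 t)) -> (forall t, is_derive y1 t (y2 t)) -> 0 < kap -> 0 < del ->
  (forall t, t <= T -> Rabs (y t) <= A) -> (forall t, t <= T -> y2 t <= 0) ->
  (forall t, t <= T -> y1 t ^ 2 <= del -> y2 t <= - kap) -> False.
Proof.
  intros Hy Hy1 Hk Hd HA H2 H3.
  assert (HA0 : 0 <= A) by (pose proof (HA T (Rle_refl _)); pose proof (Rabs_pos (y T)); lra).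
  assert (Habs : forall t, t <= T -> - A <= y t <= A).
  { intros t Ht. specialize (HA t Ht). split; [pose proof (Rle_abs (- y t)); rewrite Rabs_Ropp in *; lra | pose proof (Rle_abs (y t)); lra]. }
  assert (mono : forall a b, a <= b -> b <= T -> y1 b <= y1 a).
  { intros a b Hab HbT. destruct (Req_dec a b) as [->|Hne]; [lra|].
    destruct (mvt y1 y2 a b) as [xi [Hxi E]]; auto; [lra|].
    assert (y2 xi <= 0) by (apply H2; lra). nra. }
  assert (S1 : forall t0, t0 <= T -> y1 t0 <= 0).
  { intros t0 Ht0. destruct (Rle_or_lt (y1 t0) 0) as [|Hv]; auto. exfalso.
    set (t := t0 - (2 * A + 1) / y1 t0).
    assert (Htt : t < t0).
    { unfold t. assert (0 < (2 * A + 1) / y1 t0) by (apply Rdiv_lt_0_compat; lra). lra. }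
    destruct (mvt y y1 t t0) as [xi [Hxi E]]; auto.
    assert (y1 t0 <= y1 xi) by (apply mono; lra).
    assert (E2 : y1 t0 * (t0 - t) = 2 * A + 1) by (unfold t; field; lra).
    pose proof (Habs t ltac:(lra)). pose proof (Habs t0 Ht0). nra. }
  assert (S2 : forall t, t < T -> - y1 t * (T - t) <= 2 * A).
  { intros t Ht. destruct (mvt y y1 t T) as [xi [Hxi E]]; auto.
    assert (y1 xi <= y1 t) by (apply mono; lra).
    pose proof (Habs t ltac:(lra)). pose proof (Habs T (Rle_refl _)). nra. }
  set (eps := Rmin 1 del).
  assert (He : 0 < eps) by (apply Rmin_pos; lra).
  assert (He1 : eps <= 1) by apply Rmin_l.
  assert (He2 : eps <= del) by apply Rmin_r.
  set (t1 := T - (2 * A / eps + 1)).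
  assert (Hq : 0 <= 2 * A / eps) by (apply Rdiv_le_0_compat; lra).
  assert (S3 : forall t, t <= t1 -> y2 t <= - kap).
  { intros t Ht. apply H3. unfold t1 in Ht; lra.
    assert (Ht' : t < T) by (unfold t1 in Ht; lra).
    pose proof (S2 t Ht'). pose proof (S1 t ltac:(lra)).
    assert (eps * (T - t) >= 2 * A + eps).
    { unfold t1 in Ht. assert (eps * (2 * A / eps) = 2 * A) by (field; lra). nra. }
    assert (- y1 t < eps) by nra.
    nra. }
  set (h := (eps + 1) / kap).
  assert (Hh : 0 < h) by (apply Rdiv_lt_0_compat; lra).
  destruct (mvt y1 y2 (t1 - h) t1) as [xi [Hxi E]]; auto; [lra|].
  assert (y2 xi <= - kap) by (apply S3; lra).
  assert (Ekh : kap * h = eps + 1) by (unfold h; field; lra).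
  pose proof (S1 (t1 - h) ltac:(unfold t1; lra)).
  assert (Hy1t1 : - y1 t1 < eps).
  { assert (Ht1 : t1 < T) by (unfold t1; lra).
    pose proof (S2 t1 Ht1). pose proof (S1 t1 ltac:(lra)).
    assert (eps * (T - t1) = 2 * A + eps) by (unfold t1; field; lra). nra. }
  nra.
Qed.

Section Main.
Variables sigma p : R.
Hypothesis Hs : sigma < -2.
Hypothesis Hp : p > -1 - sigma.
Hypothesis Ha : expo_a sigma p = 1 / 2.

Lemma p_gt1 : 1 < p.
Proof. lra. Qed.

Lemma p_eq : p = -3 - 2 * sigma.
Proof.
  pose proof Ha as H. unfold expo_a in H.
  assert (1 - p <> 0) by lra.
  apply (f_equal (fun z => z * (1 - p))) in H.
  unfold Rdiv in H. rewrite Rmult_assoc, Rinv_l in H by auto. lra.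
Qed.

Definition cc : R := c_a sigma p.

Lemma cc_eq : cc = Rpower (1 / 4) (1 / (p - 1)).
Proof. unfold cc, c_a. rewrite Ha. f_equal. field. Qed.

Lemma cc_pos : 0 < cc.
Proof. unfold cc, c_a, Rpower. apply exp_pos. Qed.

Lemma cc_pow : Rpower cc (p - 1) = 1 / 4.
Proof.
  rewrite cc_eq, Rpower_mult.
  replace (1 / (p - 1) * (p - 1)) with 1 by (pose proof p_gt1; field; lra).
  apply Rpower_1. lra.
Qed.

Definition f (z : R) : R := z / 4 - Rpower z p.

Lemma f_fact z : 0 < z -> f z = z * (1 / 4 - Rpower z (p - 1)).
Proof.
  intros Hz. unfold f. replace (Rpower z p) with (Rpower z (1 + (p - 1))) by (f_equal; ring).
  rewrite Rpower_plus, Rpower_1 by auto. field.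
Qed.

Lemma pw_lt a b : 0 < a < b -> Rpower a (p - 1) < Rpower b (p - 1).
Proof. intros H. apply Rlt_Rpower_l; auto. pose proof p_gt1; lra. Qed.

Lemma pw_le a b : 0 < a <= b -> Rpower a (p - 1) <= Rpower b (p - 1).
Proof. intros H. apply Rle_Rpower_l; auto. pose proof p_gt1; lra. Qed.

Lemma pw_pos a q : 0 < Rpower a q.
Proof. unfold Rpower; apply exp_pos. Qed.

Lemma f_pos_bound a b z : 0 < a -> b < cc -> a <= z <= b ->
  a * (1 / 4 - Rpower b (p - 1)) <= f z /\ 0 < 1 / 4 - Rpower b (p - 1).
Proof.
  intros Ha0 Hb Hz. rewrite f_fact by lra.
  assert (H1 : Rpower b (p - 1) < 1 / 4) by (rewrite <- cc_pow; apply pw_lt; lra).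
  assert (H2 : Rpower z (p - 1) <= Rpower b (p - 1)) by (apply pw_le; lra).
  split; [nra|lra].
Qed.

Lemma f_neg_bound a z : cc < a -> a <= z ->
  f z <= a * (1 / 4 - Rpower a (p - 1)) /\ 1 / 4 - Rpower a (p - 1) < 0.
Proof.
  intros Ha0 Hz. pose proof cc_pos. rewrite f_fact by lra.
  assert (H1 : 1 / 4 < Rpower a (p - 1)) by (rewrite <- cc_pow; apply pw_lt; lra).
  assert (H2 : Rpower a (p - 1) <= Rpower z (p - 1)) by (apply pw_le; lra).
  split; [nra|lra].
Qed.

Lemma f_sign_lo z : 0 < z <= cc -> 0 <= f z.
Proof.
  intros Hz. rewrite f_fact by lra.
  assert (Rpower z (p - 1) <= 1 / 4) by (rewrite <- cc_pow; apply pw_le; lra). nra.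
Qed.

Lemma f_sign_hi z : cc <= z -> f z <= 0.
Proof.
  intros Hz. pose proof cc_pos. rewrite f_fact by lra.
  assert (1 / 4 <= Rpower z (p - 1)) by (rewrite <- cc_pow; apply pw_le; lra). nra.
Qed.

Lemma f_deriv z : 0 < z -> is_derive f z (1 / 4 - p * Rpower z (p - 1)).
Proof.
  intros Hz. unfold f.
  assert (H1 : is_derive (fun z => z / 4) z (1 / 4)) by (auto_derive; auto; field).
  assert (H2 : is_derive (fun z => Rpower z p) z (p * Rpower z (p - 1))).
  { apply is_derive_Reals. apply derivable_pt_lim_power; auto. }
  exact (is_derive_minus _ _ _ _ _ H1 H2).
Qed.

Definition mm : R := cc / 2.
Definition MM : R := 2 * cc.
Definition clamp (z : R) : R := Rmax mm (Rmin MM z).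
Definition g (z : R) : R := f (clamp z).
Definition Lc : R := 1 / 4 + p * Rpower MM (p - 1).
Definition Bc : R := MM / 4 + Rpower MM p.

Lemma clamp_in z : mm <= clamp z <= MM.
Proof. pose proof cc_pos. unfold clamp, mm, MM, Rmax, Rmin. repeat destruct Rle_dec; lra. Qed.

Lemma clamp_id z : mm <= z <= MM -> clamp z = z.
Proof. pose proof cc_pos. unfold clamp, mm, MM, Rmax, Rmin. repeat destruct Rle_dec; lra. Qed.

Lemma clamp_lo z : z <= cc -> clamp z <= cc.
Proof. pose proof cc_pos. unfold clamp, mm, MM, Rmax, Rmin. repeat destruct Rle_dec; lra. Qed.

Lemma clamp_hi z : cc <= z -> cc <= clamp z.
Proof. pose proof cc_pos. unfold clamp, mm, MM, Rmax, Rmin. repeat destruct Rle_dec; lra. Qed.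

Lemma clamp_lip x y : Rabs (clamp x - clamp y) <= Rabs (x - y).
Proof.
  unfold clamp, Rmax, Rmin, Rabs. repeat destruct Rle_dec; repeat destruct Rcase_abs; lra.
Qed.

Lemma f_lip x y : mm <= x <= MM -> mm <= y <= MM -> Rabs (f x - f y) <= Lc * Rabs (x - y).
Proof.
  intros Hx Hy. pose proof cc_pos. unfold mm, MM in *.
  destruct (MVT_gen f y x (fun z => 1 / 4 - p * Rpower z (p - 1))) as [xi [Hxi E]].
  - intros z Hz. apply f_deriv. pose proof (Rmin_glb_lt y x 0). 
    assert (Rmin y x > 0) by (apply Rmin_glb_lt; lra). lra.
  - intros z Hz. apply cont_pt_of. apply (cont_of_der _ _ _ (f_deriv z ltac:(assert (Rmin y x > 0) by (apply Rmin_glb_lt; lra); lra))).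
  - rewrite E, Rabs_mult. apply Rmult_le_compat_r. apply Rabs_pos.
    assert (Hxi' : cc / 2 <= xi <= 2 * cc).
    { split; [apply Rle_trans with (Rmin y x); [apply Rmin_glb; lra | lra] |
               apply Rle_trans with (Rmax y x); [lra | apply Rmax_lub; lra]]. }
    assert (H0 : 0 < Rpower xi (p - 1)) by apply pw_pos.
    assert (H1 : Rpower xi (p - 1) <= Rpower MM (p - 1)) by (apply pw_le; unfold MM; lra).
    pose proof p_gt1. unfold Lc. apply Rabs_le. split; nra.
Qed.

Lemma g_lip x y : Rabs (g x - g y) <= Lc * Rabs (x - y).
Proof.
  unfold g. eapply Rle_trans. apply f_lip; apply clamp_in.
  apply Rmult_le_compat_l. pose proof p_gt1. pose proof (pw_pos MM (p - 1)). unfold Lc. nra.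
  apply clamp_lip.
Qed.

Lemma Lc_ge0 : 0 <= Lc.
Proof. pose proof p_gt1. pose proof (pw_pos MM (p - 1)). unfold Lc. nra. Qed.

Lemma g_bound x : Rabs (g x) <= Bc.
Proof.
  unfold g. pose proof (clamp_in x) as Hc. pose proof cc_pos. unfold mm, MM in Hc.
  set (z := clamp x) in *. unfold f, Bc.
  assert (Rpower z p <= Rpower MM p) by (apply Rle_Rpower_l; unfold MM; lra).
  pose proof (pw_pos z p). unfold MM in *. apply Rabs_le. split; lra.
Qed.

Lemma g_cont' x : continuous g x.
Proof. apply (g_cont g Lc g_lip Lc_ge0). Qed.

Lemma g_nonneg z : z <= cc -> 0 <= g z.
Proof.
  intros Hz. unfold g. apply f_sign_lo. pose proof (clamp_in z). pose proof (clamp_lo z Hz).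
  pose proof cc_pos. unfold mm in *. lra.
Qed.

Lemma g_nonpos z : cc <= z -> g z <= 0.
Proof. intros Hz. unfold g. apply f_sign_hi. apply clamp_hi; auto. Qed.


Definition PP (z : R) : R := - RInt g cc z.

Lemma PP_deriv z : is_derive PP z (- g z).
Proof. unfold PP. exact (is_derive_opp _ _ _ (prim_deriv g cc g_cont' z)). Qed.

Lemma PP_c : PP cc = 0.
Proof. unfold PP. rewrite RInt_point. change (@zero R_CompleteNormedModule) with 0. ring. Qed.

Lemma Pdiff x y k : x < y -> (forall xi, x <= xi <= y -> k <= g xi) -> k * (y - x) <= PP x - PP y.
Proof.
  intros Hxy H. destruct (mvt PP (fun z => - g z) x y Hxy PP_deriv) as [xi [Hxi E]].
  specialize (H xi Hxi). nra.
Qed.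

Lemma Pdiff2 x y k : x < y -> (forall xi, x <= xi <= y -> g xi <= - k) -> k * (y - x) <= PP y - PP x.
Proof.
  intros Hxy H. destruct (mvt PP (fun z => - g z) x y Hxy PP_deriv) as [xi [Hxi E]].
  specialize (H xi Hxi). nra.
Qed.

Lemma Pm_pos : 0 < PP mm.
Proof.
  pose proof cc_pos. unfold mm.
  destruct (f_pos_bound (cc / 2) (3 * cc / 4) (3 * cc / 4)) as [_ Hk]; try lra.
  set (kap := cc / 2 * (1 / 4 - Rpower (3 * cc / 4) (p - 1))).
  assert (H1 : kap * (3 * cc / 4 - cc / 2) <= PP (cc / 2) - PP (3 * cc / 4)).
  { apply Pdiff. lra. intros xi Hxi. unfold g. rewrite clamp_id by (unfold mm, MM; lra).
    apply (f_pos_bound (cc / 2) (3 * cc / 4) xi); lra. }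
  assert (H2 : 0 * (cc - 3 * cc / 4) <= PP (3 * cc / 4) - PP cc).
  { apply Pdiff. lra. intros xi Hxi. apply g_nonneg. lra. }
  rewrite PP_c in H2. assert (0 < kap) by (unfold kap; nra). nra.
Qed.

Lemma PM_pos : 0 < PP MM.
Proof.
  pose proof cc_pos. unfold MM.
  destruct (f_neg_bound (3 * cc / 2) (3 * cc / 2)) as [_ Hk]; try lra.
  set (kap := - (3 * cc / 2 * (1 / 4 - Rpower (3 * cc / 2) (p - 1)))).
  assert (H1 : kap * (2 * cc - 3 * cc / 2) <= PP (2 * cc) - PP (3 * cc / 2)).
  { apply Pdiff2. lra. intros xi Hxi. unfold g. rewrite clamp_id by (unfold mm, MM; lra).
    unfold kap. rewrite Ropp_involutive. apply (f_neg_bound (3 * cc / 2) xi); lra. }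
  assert (H2 : 0 * (3 * cc / 2 - cc) <= PP (3 * cc / 2) - PP cc).
  { apply Pdiff2. lra. intros xi Hxi. rewrite Ropp_0. apply g_nonpos. lra. }
  rewrite PP_c in H2. assert (0 < kap) by (unfold kap; nra). nra.
Qed.

Definition Pmin : R := Rmin (PP mm) (PP MM).
Definition v0 : R := sqrt Pmin.

Lemma Pmin_pos : 0 < Pmin.
Proof. unfold Pmin. apply Rmin_pos. apply Pm_pos. apply PM_pos. Qed.

Section Sol.
Variables w w1 : R -> R.
Hypothesis Hw0 : w 0 = cc.
Hypothesis Hw10 : w1 0 = v0.
Hypothesis Hw : forall t, is_derive w t (w1 t).
Hypothesis Hw1 : forall t, is_derive w1 t (g (w t)).

Lemma energy_deriv t : is_derive (fun t => w1 t * w1 t + 2 * PP (w t)) t 0.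
Proof.
  pose proof (is_derive_mult w1 w1 t _ _ (Hw1 t) (Hw1 t) Rmult_comm) as h1.
  pose proof (is_derive_comp PP w t _ _ (PP_deriv (w t)) (Hw t)) as h2.
  pose proof (is_derive_scal _ _ 2 _ h2) as h3.
  pose proof (is_derive_plus _ _ _ _ _ h1 h3) as h4.
  replace 0 with (plus (plus (mult (g (w t)) (w1 t)) (mult (w1 t) (g (w t)))) (2 * (scal (w1 t) (- g (w t))))).
  exact h4.
  unfold plus, mult, scal; simpl. unfold mult; simpl. ring.
Qed.

Lemma energy t : w1 t * w1 t + 2 * PP (w t) = Pmin.
Proof.
  assert (H0 : w1 0 * w1 0 + 2 * PP (w 0) = Pmin).
  { rewrite Hw0, Hw10, PP_c. unfold v0. rewrite sqrt_sqrt. ring. apply Rlt_le, Pmin_pos. }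
  destruct (Rtotal_order t 0) as [Ht|[->|Ht]]; auto.
  - destruct (mvt _ _ t 0 Ht energy_deriv) as [xi [_ E]]. lra.
  - destruct (mvt _ _ 0 t Ht energy_deriv) as [xi [_ E]]. lra.
Qed.

Lemma w_bounds t : mm < w t < MM.
Proof.
  pose proof (energy t) as E. pose proof (Rle_0_sqr (w1 t)) as Hsq. unfold Rsqr in Hsq.
  assert (HP : PP (w t) < Pmin) by (pose proof Pmin_pos; lra).
  assert (H1 : Pmin <= PP mm) by apply Rmin_l.
  assert (H2 : Pmin <= PP MM) by apply Rmin_r.
  pose proof cc_pos. unfold mm, MM in *.
  split.
  - destruct (Rlt_or_le (cc / 2) (w t)) as [|Hle]; auto. exfalso.
    destruct (Req_dec (w t) (cc / 2)) as [Heq|Hne].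
    + rewrite Heq in HP. lra.
    + assert (0 * (cc / 2 - w t) <= PP (w t) - PP (cc / 2)).
      { apply Pdiff. lra. intros xi Hxi. apply g_nonneg. lra. }
      lra.
  - destruct (Rlt_or_le (w t) (2 * cc)) as [|Hle]; auto. exfalso.
    destruct (Req_dec (w t) (2 * cc)) as [Heq|Hne].
    + rewrite Heq in HP. lra.
    + assert (0 * (w t - 2 * cc) <= PP (w t) - PP (2 * cc)).
      { apply Pdiff2. lra. intros xi Hxi. rewrite Ropp_0. apply g_nonpos. lra. }
      lra.
Qed.

Lemma g_w t : g (w t) = f (w t).
Proof. unfold g. rewrite clamp_id; auto. pose proof (w_bounds t). lra. Qed.

Lemma eta_exists : exists d, 0 < d /\ forall z, Rabs (z - cc) < d -> PP z < Pmin / 4.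
Proof.
  destruct (eps_of_cont PP cc (cont_of_der PP cc _ (PP_deriv cc)) (Pmin / 4)) as [d [Hd H]].
  pose proof Pmin_pos; lra.
  exists d; split; auto. intros z Hz. specialize (H z Hz). rewrite PP_c, Rminus_0_r in H.
  pose proof (Rle_abs (PP z)). lra.
Qed.

Lemma sign_changes T : (exists t, t < T /\ cc < w t) /\ (exists t, t < T /\ w t < cc).
Proof.
  destruct eta_exists as [d [Hd Hdp]].
  pose proof cc_pos. pose proof Pmin_pos.
  set (eta := Rmin d (cc / 2)).
  assert (He1 : 0 < eta) by (apply Rmin_pos; lra).
  assert (He2 : eta <= d) by apply Rmin_l.
  assert (He3 : eta <= cc / 2) by apply Rmin_r.
  assert (Hfar : forall t, w1 t * w1 t <= Pmin / 2 -> d <= Rabs (w t - cc)).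
  { intros t Ht. pose proof (energy t). apply Rnot_lt_le. intros Hc. specialize (Hdp _ Hc). lra. }
  split.
  - apply NNPP. intros Hn.
    assert (Hle : forall t, t <= T - 1 -> w t <= cc).
    { intros t Ht. apply Rnot_lt_le. intro. apply Hn. exists t. split; lra. }
    set (b := cc - eta).
    destruct (f_pos_bound mm b b) as [_ Hk]; unfold mm, b; try lra.
    apply (no_one_side (fun t => - w t) (fun t => - w1 t) (fun t => - g (w t)) (T - 1) MM
             (mm * (1 / 4 - Rpower b (p - 1))) (Pmin / 2)).
    + intros t. exact (is_derive_opp _ _ _ (Hw t)).
    + intros t. exact (is_derive_opp _ _ _ (Hw1 t)).
    + unfold mm. nra.
    + lra.
    + intros t _. rewrite Rabs_Ropp. pose proof (w_bounds t). unfold mm, MM in *.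
      rewrite Rabs_pos_eq; lra.
    + intros t Ht. pose proof (g_nonneg _ (Hle t Ht)). lra.
    + intros t Ht Hs2. assert (Hs3 : w1 t * w1 t <= Pmin / 2) by (simpl in Hs2; nra).
      specialize (Hfar t Hs3). pose proof (Hle t Ht).
      rewrite Rabs_left1 in Hfar by lra.
      pose proof (w_bounds t). rewrite g_w.
      destruct (f_pos_bound mm b (w t)) as [Hf _]; unfold mm, b in *; try lra.
  - apply NNPP. intros Hn.
    assert (Hle : forall t, t <= T - 1 -> cc <= w t).
    { intros t Ht. apply Rnot_lt_le. intro. apply Hn. exists t. split; lra. }
    set (a := cc + eta).
    destruct (f_neg_bound a a) as [_ Hk]; unfold a; try lra.
    apply (no_one_side w w1 (fun t => g (w t)) (T - 1) MM
             (- (a * (1 / 4 - Rpower a (p - 1)))) (Pmin / 2)); auto.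
    + assert (0 < a) by (unfold a; lra). nra.
    + lra.
    + intros t _. pose proof (w_bounds t). unfold mm, MM in *.
      rewrite Rabs_pos_eq; lra.
    + intros t Ht. apply g_nonpos, Hle, Ht.
    + intros t Ht Hs2. assert (Hs3 : w1 t * w1 t <= Pmin / 2) by (simpl in Hs2; nra).
      specialize (Hfar t Hs3). pose proof (Hle t Ht).
      rewrite Rabs_pos_eq in Hfar by lra.
      rewrite g_w.
      destruct (f_neg_bound a (w t)) as [Hf _]; unfold a in *; try lra.
Qed.

Definition u (x : R) : R := sqrt x * w (ln x).
Definition u1 (x : R) : R := (w (ln x) / 2 + w1 (ln x)) / sqrt x.
Definition u2 (x : R) : R := (g (w (ln x)) - w (ln x) * / 4) * / (x * sqrt x).

Lemma u_der x : 0 < x -> is_derive u x (u1 x).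
Proof.
  intros Hx. unfold u, u1. auto_derive.
  - repeat split; auto. exists (w1 (ln x)). apply Hw.
  - replace (Derive (fun x0 => w x0) (ln x)) with (w1 (ln x)) by (symmetry; apply is_derive_unique; apply Hw).
    assert (Hsx : 0 < sqrt x) by (apply sqrt_lt_R0; auto).
    assert (Hx2 : x = sqrt x * sqrt x) by (rewrite sqrt_sqrt; lra).
    set (W := w (ln x)). set (W1 := w1 (ln x)). set (s := sqrt x) in *.
    rewrite Hx2. field. lra.
Qed.

Lemma u1_der x : 0 < x -> is_derive u1 x (u2 x).
Proof.
  intros Hx. unfold u1, u2. auto_derive.
  - assert (Hsx : 0 < sqrt x) by (apply sqrt_lt_R0; auto).
    repeat split; auto.
    + exists (w1 (ln x)). apply Hw.
    + exists (g (w (ln x))). apply Hw1.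
    + lra.
  - replace (Derive (fun x0 => w x0) (ln x)) with (w1 (ln x)) by (symmetry; apply is_derive_unique; apply Hw).
    replace (Derive (fun x0 => w1 x0) (ln x)) with (g (w (ln x))) by (symmetry; apply is_derive_unique; apply Hw1).
    assert (Hsx : 0 < sqrt x) by (apply sqrt_lt_R0; auto).
    assert (Hx2 : x = sqrt x * sqrt x) by (rewrite sqrt_sqrt; lra).
    set (W := w (ln x)). set (W1 := w1 (ln x)). set (G := g W). set (s := sqrt x) in *.
    rewrite Hx2. field. lra.
Qed.

Lemma loc_pos x : 0 < x -> locally x (fun y => 0 < y).
Proof.
  intros Hx. exists (mkposreal x Hx). intros y Hy. pose proof (proj1 (ballR _ _ _) Hy) as Hy2. simpl in Hy2. clear Hy.
  unfold Rabs in Hy2. destruct Rcase_abs; lra.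
Qed.

Lemma Du_eq y : 0 < y -> Derive u y = u1 y.
Proof. intros Hy. apply is_derive_unique, u_der, Hy. Qed.

Lemma DDu_eq y : 0 < y -> Derive (Derive u) y = u2 y.
Proof.
  intros Hy. rewrite (Derive_ext_loc (Derive u) u1 y).
  - apply is_derive_unique, u1_der, Hy.
  - apply (filter_imp (fun z => 0 < z)). intros z Hz. apply Du_eq, Hz. apply loc_pos, Hy.
Qed.

Lemma u2_cont x : 0 < x -> continuous u2 x.
Proof.
  intros Hx. unfold u2.
  assert (Hln : continuous ln x) by (apply (cont_of_der ln x (/ x)), is_derive_ln, Hx).
  assert (Hwc : forall z, continuous w z) by (intros z; apply (cont_of_der w z (w1 z)), Hw).
  apply contR_mult.
  - apply contR_minus.
    + apply (contR_comp ln (fun z => g (w z))); auto.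
      apply (contR_comp w g); auto. apply g_cont'.
    + apply contR_mult. apply (contR_comp ln w); auto. apply continuous_const.
  - apply (cont_of_ex (fun y => / (y * sqrt y))). auto_derive.
    assert (0 < sqrt x) by (apply sqrt_lt_R0; auto). split; auto. split; auto.
    apply Rgt_not_eq. apply Rmult_lt_0_compat; auto.
Qed.

Lemma ode x : 0 < x -> u2 x + Rpower x sigma * Rpower (u x) p = 0.
Proof.
  intros Hx. unfold u2, u.
  rewrite (g_w (ln x)).
  assert (HW : 0 < w (ln x)) by (pose proof (w_bounds (ln x)); pose proof cc_pos; unfold mm in *; lra).
  assert (Hsx : 0 < sqrt x) by (apply sqrt_lt_R0; auto).
  rewrite <- (Rpower_mult_distr _ _ _ Hsx HW).
  assert (E : Rpower x sigma * Rpower (sqrt x) p = / (x * sqrt x)).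
  { rewrite <- (Rpower_sqrt x Hx) at 1. rewrite Rpower_mult, <- Rpower_plus.
    replace (sigma + / 2 * p) with (- (1 + / 2)) by (rewrite p_eq; field).
    rewrite Rpower_Ropp, Rpower_plus, Rpower_1, Rpower_sqrt; auto. }
  unfold f. set (W := w (ln x)) in *.
  replace (Rpower x sigma * (Rpower (sqrt x) p * Rpower W p)) with
    ((Rpower x sigma * Rpower (sqrt x) p) * Rpower W p) by ring.
  rewrite E. field. split; lra.
Qed.

Lemma main_sol : exists u : R -> R,
    (forall x, 0 < x -> 0 < u x) /\
    C2_pos u /\
    (forall x, 0 < x ->
       Derive (Derive u) x + Rpower x sigma * Rpower (u x) p = 0) /\
    changes_sign_inf_near_0 (fun x => u x - u_a sigma p x) /\
    (exists M : R, forall x, 0 < x -> Rabs (u x / u_a sigma p x) <= M) /\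
    ~ (exists l : R,
         filterlim (fun x => u x / u_a sigma p x) (at_right 0) (locally l)).
Proof.
  pose proof cc_pos as Hcc.
  assert (Hua : forall x, 0 < x -> u_a sigma p x = cc * sqrt x).
  { intros x Hx. unfold u_a. rewrite Ha. fold cc. rewrite <- Rpower_sqrt by auto. f_equal. f_equal. field. }
  assert (Hwpos : forall t, 0 < w t) by (intros t; pose proof (w_bounds t); unfold mm in *; lra).
  assert (Hratio : forall x, 0 < x -> u x / u_a sigma p x = w (ln x) / cc).
  { intros x Hx. rewrite Hua by auto. unfold u.
    assert (0 < sqrt x) by (apply sqrt_lt_R0; auto). field. split; lra. }
  exists u. split; [|split; [|split; [|split; [|split]]]].
  - intros x Hx. unfold u. apply Rmult_lt_0_compat; auto. apply sqrt_lt_R0; auto.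
  - split; [|split].
    + intros x Hx. exists (u1 x). apply u_der, Hx.
    + intros x Hx. exists (u2 x). apply (is_derive_ext_loc u1).
      * apply (filter_imp (fun z => 0 < z)). intros z Hz. symmetry. apply Du_eq, Hz. apply loc_pos, Hx.
      * apply u1_der, Hx.
    + intros x Hx. apply (continuous_ext_loc _ u2).
      * apply (filter_imp (fun z => 0 < z)). intros z Hz. symmetry. apply DDu_eq, Hz. apply loc_pos, Hx.
      * apply u2_cont, Hx.
  - intros x Hx. rewrite DDu_eq by auto. apply ode, Hx.
  - intros eps Heps. destruct (sign_changes (ln eps)) as [[t1 [Ht1 Hw1']] [t2 [Ht2 Hw2']]].
    split.
    + exists (exp t1). split. split. apply exp_pos. rewrite <- (exp_ln eps) by auto. apply exp_increasing; auto.
      rewrite Hua by apply exp_pos. unfold u. rewrite ln_exp.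
      assert (0 < sqrt (exp t1)) by (apply sqrt_lt_R0, exp_pos). nra.
    + exists (exp t2). split. split. apply exp_pos. rewrite <- (exp_ln eps) by auto. apply exp_increasing; auto.
      rewrite Hua by apply exp_pos. unfold u. rewrite ln_exp.
      assert (0 < sqrt (exp t2)) by (apply sqrt_lt_R0, exp_pos). nra.
  - exists (MM / cc). intros x Hx. rewrite Hratio by auto.
    pose proof (w_bounds (ln x)). pose proof (Hwpos (ln x)).
    rewrite Rabs_pos_eq by (apply Rdiv_le_0_compat; lra).
    apply Rmult_le_compat_r. apply Rlt_le, Rinv_0_lt_compat; auto. lra.
  - intros [l Hl].
    assert (Hlim : forall eps, 0 < eps -> exists T, forall t, t < T -> Rabs (w t / cc - l) < eps).
    { intros eps Heps.
      destruct (proj1 (filterlim_locally (F:=at_right 0) _ l) Hl (mkposreal eps Heps)) as [d Hd].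
      exists (ln d). intros t Ht.
      assert (Hx : 0 < exp t) by apply exp_pos.
      assert (Hxd : exp t < d).
      { rewrite <- (exp_ln d) by apply cond_pos. apply exp_increasing; auto. }
      specialize (Hd (exp t)).
      rewrite Hratio in Hd by auto. rewrite ln_exp in Hd.
      apply Hd; auto. apply ballR. rewrite Rminus_0_r, Rabs_pos_eq; lra. }
    assert (Hl1 : l = 1).
    { symmetry. apply abs_le_eps_eq. intros eps Heps.
      destruct (Hlim eps Heps) as [T HT].
      destruct (sign_changes T) as [[t1 [Ht1 Hw1']] [t2 [Ht2 Hw2']]].
      pose proof (HT t1 Ht1). pose proof (HT t2 Ht2).
      assert (1 < w t1 / cc) by (apply (Rmult_lt_reg_r cc); auto; field_simplify; lra).
      assert (w t2 / cc < 1) by (apply (Rmult_lt_reg_r cc); auto; field_simplify; lra).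
      revert H H0. unfold Rabs. repeat destruct Rcase_abs; intros; lra. }
    subst l.
    destruct eta_exists as [d [Hd Hdp]].
    pose proof Pmin_pos.
    set (q := Rmin d (Rmin 1 (Pmin / 4))).
    assert (Hq1 : 0 < q) by (apply Rmin_pos; auto; apply Rmin_pos; lra).
    assert (Hq2 : q <= d) by apply Rmin_l.
    assert (Hq3 : q <= 1) by (eapply Rle_trans; [apply Rmin_r| apply Rmin_l]).
    assert (Hq4 : q <= Pmin / 4) by (eapply Rle_trans; [apply Rmin_r| apply Rmin_r]).
    destruct (Hlim (q / (2 * cc))) as [T HT]. apply Rdiv_lt_0_compat; lra.
    assert (Hc : forall t, t < T -> Rabs (w t - cc) < q / 2).
    { intros t Ht. specialize (HT t Ht).
      replace (w t - cc) with (cc * (w t / cc - 1)) by (field; lra).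
      rewrite Rabs_mult, Rabs_pos_eq by lra.
      replace (q / 2) with (cc * (q / (2 * cc))) by (field; lra).
      apply Rmult_lt_compat_l; auto. }
    destruct (mvt w w1 (T - 2) (T - 1)) as [xi [Hxi E]]; auto. lra.
    pose proof (Hc xi ltac:(lra)) as Hxi1.
    pose proof (Hdp (w xi) ltac:(lra)).
    pose proof (energy xi).
    pose proof (Hc (T - 1) ltac:(lra)). pose proof (Hc (T - 2) ltac:(lra)).
    replace (T - 1 - (T - 2)) with 1 in E by ring. rewrite Rmult_1_r in E.
    assert (Hb : Rabs (w1 xi) < q).
    { rewrite <- E. replace (w (T - 1) - w (T - 2)) with ((w (T - 1) - cc) - (w (T - 2) - cc)) by ring.
      eapply Rle_lt_trans. apply Rabs_triang. rewrite Rabs_Ropp. lra. }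
    assert (w1 xi * w1 xi < q * q).
    { assert (Eq : w1 xi * w1 xi = Rabs (w1 xi) * Rabs (w1 xi)) by (rewrite <- Rabs_mult; rewrite Rabs_pos_eq; [ring| apply Rle_0_sqr]).
      pose proof (Rabs_pos (w1 xi)). rewrite Eq. nra. }
    nra.
Qed.

End Sol.

Lemma main_exists : exists u : R -> R,
    (forall x, 0 < x -> 0 < u x) /\
    C2_pos u /\
    (forall x, 0 < x ->
       Derive (Derive u) x + Rpower x sigma * Rpower (u x) p = 0) /\
    changes_sign_inf_near_0 (fun x => u x - u_a sigma p x) /\
    (exists M : R, forall x, 0 < x -> Rabs (u x / u_a sigma p x) <= M) /\
    ~ (exists l : R,
         filterlim (fun x => u x / u_a sigma p x) (at_right 0) (locally l)).
Proof.
  destruct (picard_sol g Bc Lc cc v0 g_bound g_lip Lc_ge0) as [w [w1 [H0 [H1 [H2 H3]]]]].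
  eapply main_sol; eauto.
Qed.

End Main.

Theorem theorem5p9 (sigma p : R) :
  sigma < -2 ->
  p > -1 - sigma ->
  expo_a sigma p = 1 / 2 ->
  exists u : R -> R,
    (forall x, 0 < x -> 0 < u x) /\
    C2_pos u /\
    (forall x, 0 < x ->
       Derive (Derive u) x + Rpower x sigma * Rpower (u x) p = 0) /\
    changes_sign_inf_near_0 (fun x => u x - u_a sigma p x) /\
    (exists M : R, forall x, 0 < x -> Rabs (u x / u_a sigma p x) <= M) /\
    ~ (exists l : R,
         filterlim (fun x => u x / u_a sigma p x) (at_right 0) (locally l)).
Proof.
  intros H1 H2 H3. exact (main_exists sigma p H1 H2 H3).
Qed.
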